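(* Let $\mathcal{H}$ be a finite-dimensional complex Hilbert space and let $V_1, \dots, V_n$ be linear operators on $\mathcal{H}$ that mutually commute, i.e. $V_\alpha V_\beta = V_\beta V_\alpha$ for all $\alpha, \beta \in \{1,\dots,n\}$. Suppose that $$\sum_{\alpha=1}^n V_\alpha^* V_\alpha = \mathrm{Id}.$$ Then each $V_\alpha$ is normal, i.e. $V_\alpha V_\alpha^* = V_\alpha^* V_\alpha$. In particular, $V_1,\dots,V_n$ are simultaneously diagonalizable: there exists an orthonormal basis of $\mathcal{H}$ consisting of joint eigenvectors of all $V_\alpha$.
   Context: $V^*$ denotes the Hermitian adjoint of $V$. *)

(* Defs.v *)
From HB Require Import structures.
From mathcomp Require Import all_boot all_order all_algebra.
Set Implicit Arguments.
Unset Strict Implicit.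
Unset Printing Implicit Defensive.

(* Main.v *)
Require Import Defs.
From HB Require Import structures.
From mathcomp Require Import all_boot all_order all_algebra.
From mathcomp Require Import ring zify.
Import Order.TTheory GRing.Theory Num.Theory.
Local Open Scope ring_scope.
Local Open Scope sesquilinear_scope.

Lemma sq_ge0 (C : numClosedFieldType) n (f : 'I_n -> C) :
  0 <= \sum_i (f i)^* * f i.
Proof. by apply: sumr_ge0 => i _; rewrite mulrC mul_conjC_ge0. Qed.

Lemma sq_eq0 (C : numClosedFieldType) n (f : 'I_n -> C) :
  \sum_i (f i)^* * f i = 0 -> forall i, f i = 0.
Proof.
move=> h i.
have ge : forall i, true -> 0 <= (f i)^* * f i by move=> j _; rewrite mulrC mul_conjC_ge0.
have := psumr_eq0P ge h (i:=i) isT.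
by rewrite mulrC => /eqP; rewrite mul_conjC_eq0 => /eqP.
Qed.

Lemma alg (C : numClosedFieldType) n (a b w : 'I_n -> C) :
  \sum_i (a i)^* * a i = 1 ->
  \sum_i (w i)^* * a i = 0 ->
  \sum_i (b i)^* * b i + \sum_i (w i)^* * w i <= 1 ->
  (forall i j, w i * b j + a i * w j = w j * b i + a j * w i) ->
  forall i, w i = 0.
Proof.
move=> hA hB hC hD.
pose d i := a i - b i.
have hd i j : d i * w j = d j * w i.
  apply/eqP; rewrite -subr_eq0.
  have -> : d i * w j - d j * w i = (w i * b j + a i * w j) - (w j * b i + a j * w i)
    by rewrite /d; ring.
  by rewrite hD subrr.
pose N := \sum_i (d i)^* * d i.
pose s := \sum_i (d i)^* * w i.
have hNw j : N * w j = d j * s.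
  rewrite /N /s mulr_suml mulr_sumr; apply: eq_bigr => i _.
  by rewrite -mulrA hd mulrCA.
have haw : \sum_j (a j)^* * w j = 0.
  transitivity ((\sum_i (w i)^* * a i)^*); last by rewrite hB conjC0.
  rewrite rmorph_sum; apply: eq_bigr => j _.
  by rewrite rmorphM /= conjCK mulrC.
have hs : s * (1 - \sum_i (a i)^* * b i) = 0.
  have : \sum_j (a j)^* * (N * w j) = 0.
    rewrite (eq_bigr (fun j => N * ((a j)^* * w j))); last by move=> j _; rewrite mulrCA.
    by rewrite -mulr_sumr haw mulr0.
  have -> : \sum_j (a j)^* * (N * w j) = \sum_j ((a j)^* * d j) * s.
    by apply: eq_bigr => j _; rewrite hNw mulrA.
  rewrite -mulr_suml /d (eq_bigr (fun j => (a j)^* * a j - (a j)^* * b j)); last first.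
    by move=> j _; rewrite mulrBr.
  by rewrite sumrB hA mulrC.
have hw0 : \sum_i (w i)^* * w i = 0 -> forall i, w i = 0 by exact: (@sq_eq0 _ _ w).
have fin : N + \sum_i (w i)^* * w i <= 0 -> forall i, w i = 0.
  move=> h; apply: hw0; apply/eqP; rewrite eq_le sq_ge0 andbT.
  by apply: le_trans h; rewrite lerDr sq_ge0.
have [s0|] := eqVneq s 0.
  have [N0|Nn0] := eqVneq N 0; last first.
    by move=> i; have := hNw i; rewrite s0 mulr0 => /eqP; rewrite mulf_eq0 (negPf Nn0) => /eqP.
  have dz := @sq_eq0 _ _ d N0.
  have hab i : b i = a i by have := dz i; rewrite /d => /eqP; rewrite subr_eq0 => /eqP.
  apply: fin; rewrite N0 add0r.
  have hbb : \sum_i (b i)^* * b i = 1 by rewrite -hA; apply: eq_bigr => i _; rewrite hab.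
  by move: hC; rewrite hbb -[X in _ <= X](addr0 1) lerD2l.
move=> sn0; move: hs => /eqP; rewrite mulf_eq0 (negPf sn0) /= subr_eq0 => /eqP hab.
have hba : \sum_i (b i)^* * a i = 1.
  transitivity ((\sum_i (a i)^* * b i)^*); last by rewrite -hab conjC1.
  rewrite rmorph_sum; apply: eq_bigr => j _.
  by rewrite rmorphM /= conjCK mulrC.
apply: fin.
have -> : N = \sum_i (b i)^* * b i - 1.
  rewrite /N /d (eq_bigr (fun i => ((a i)^* * a i - (a i)^* * b i) - ((b i)^* * a i - (b i)^* * b i))); last first.
    by move=> i _; rewrite rmorphB mulrBl !mulrBr.
  rewrite sumrB !sumrB hA -hab hba; ring.
by rewrite addrAC subr_le0.
Qed.
Lemma entryE (C : numClosedFieldType) d n (T : 'I_n -> 'M[C]_d)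
 (H3 : \sum_a (T a)^t* *m T a = 1%:M) :
 forall i j, \sum_a \sum_k (T a k i)^* * T a k j = (i == j)%:R.
Proof.
move=> i j; move/matrixP: H3 => /(_ i j).
rewrite summxE mxE => <-; apply: eq_bigr => a _; rewrite mxE.
by apply: eq_bigr => k _; rewrite !mxE.
Qed.

Lemma trig_diag (C : numClosedFieldType) d n (T : 'I_n -> 'M[C]_d)
 (H1 : forall a, is_trig_mx (T a))
 (H2 : forall a b, T a *m T b = T b *m T a)
 (H3 : \sum_a (T a)^t* *m T a = 1%:M) :
 forall a (i j : 'I_d), i != j -> T a i j = 0.
Proof.
have E := @entryE _ _ _ _ H3.
have H1' a (i j : 'I_d) : (i < j)%N -> T a i j = 0.
  by move=> h; move/is_trig_mxP: (H1 a) => ->.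
suff main : forall m (j : 'I_d), (d - j <= m)%N -> forall a k, k != j -> T a k j = 0.
  by move=> a i j hij; apply: (main d) => //; rewrite leq_subr.
elim=> [|m IH] j hj a k hkj.
  by move: hj (ltn_ord j); rewrite leqn0 subn_eq0 => h1 h2; move: (leq_ltn_trans h1 h2); rewrite ltnn.
case: (ltngtP k j) => [kj|jk|ekj]; first exact: H1'; last first.
  by move: hkj; rewrite (ord_inj ekj) eqxx.
have colD (m' : 'I_d) : (j < m')%N -> forall a k, k != m' -> T a k m' = 0.
  by move=> h; apply: IH; move: hj h (ltn_ord m'); lia.
have zero_mid (al be : 'I_n) (m' : 'I_d) : m' != j -> m' != k -> T al k m' * T be m' j = 0.
  move=> h1 h2; case: (ltngtP m' j) => [mj|jm|emj].
  - by rewrite (H1' be m' j mj) mulr0.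
  - by rewrite (colD m' jm al k) ?mul0r // eq_sym.
  - by move: h1; rewrite (ord_inj emj) eqxx.
apply: (@alg C n (fun al => T al k k) (fun al => T al j j) (fun al => T al k j)).
- transitivity ((k == k)%:R : C); last by rewrite eqxx.
  rewrite -E; apply: eq_bigr => al _.
  rewrite (bigD1 k) //= big1 ?addr0 // => m' hm'.
  by rewrite (colD k jk al m' hm') mulr0.
- transitivity ((j == k)%:R : C); last by rewrite eq_sym (negPf hkj).
  rewrite -E; apply: eq_bigr => al _.
  rewrite (bigD1 k) //= big1 ?addr0 // => m' hm'.
  by rewrite (colD k jk al m' hm') mulr0.
- apply: (@le_trans _ _ ((j == j)%:R : C)); last by rewrite eqxx.
  rewrite -E -big_split /=; apply: ler_sum => al _.
  rewrite (bigD1 j) //= (bigD1 k) /=; last by rewrite hkj.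
  rewrite lerD2l lerDl; apply: sumr_ge0 => m' _; rewrite mulrC mul_conjC_ge0 //.
- move=> al be; move/matrixP: (H2 al be) => /(_ k j); rewrite !mxE.
  rewrite (bigD1 j) //= (bigD1 k) /=; last by rewrite hkj.
  rewrite [in X in _ = X -> _](bigD1 j) //= [in X in _ = X -> _](bigD1 k) /=; last by rewrite hkj.
  rewrite !big1 ?addr0; first by move=> ->.
  + by move=> m' /andP[h1 h2]; apply: zero_mid.
  + by move=> m' /andP[h1 h2]; apply: zero_mid.
Qed.

Theorem theorem1 (C : numClosedFieldType) (d n : nat) (V : 'I_n -> 'M[C]_d)
  (hcomm : forall a b : 'I_n, V a *m V b = V b *m V a)
  (hsum : \sum_(a < n) (V a)^t* *m V a = 1%:M) :
  (forall a : 'I_n, V a \is normalmx) /\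
  (exists U : 'M[C]_d,
      U ^t* *m U = 1%:M /\
      forall (a : 'I_n) (j : 'I_d), exists lambda : C,
        V a *m col j U = lambda *: col j U).
Proof.
have [P Pu Ptrig] : exists2 P : 'M[C]_d, P \is unitarymx &
    all [pred A | similar_trig P A] (map V (enum 'I_n)).
  apply: cotrigonalization => A B /mapP[a _ ->] /mapP[b _ ->]; exact: hcomm.
have PPt : P *m P^t* = 1%:M by apply/unitarymxP.
have PtP : P^t* *m P = 1%:M by apply: mulmx1C.
pose T a := P *m V a *m P^t*.
have mulT X Y : (P *m X *m P^t*) *m (P *m Y *m P^t*) = P *m (X *m Y) *m P^t*.
  by rewrite !mulmxA mulmxKtV.
have ctT X : (P *m X *m P^t*)^t* = P *m X^t* *m P^t*.
  by rewrite !trmx_mul !map_mxM trmxCK mulmxA.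
have H1 a : is_trig_mx (T a).
  have /allP /(_ (V a)) := Ptrig; rewrite map_f ?mem_enum //= => /(_ isT).
  by rewrite /similar_to conjymx.
have H2 a b : T a *m T b = T b *m T a by rewrite /T !mulT hcomm.
have H3 : \sum_a (T a)^t* *m T a = 1%:M.
  rewrite /T (eq_bigr (fun a => P *m ((V a)^t* *m V a) *m P^t*)); last first.
    by move=> a _; rewrite ctT mulT.
  by rewrite -mulmx_suml -mulmx_sumr hsum mulmx1 PPt.
have D := @trig_diag _ _ _ T H1 H2 H3.
have VT a : V a = P^t* *m T a *m P.
  by rewrite /T !mulmxA PtP mul1mx mulmxKtV.
have Tdiag a : T a = diag_mx (\row_i T a i i).
  apply/matrixP => i j; rewrite [RHS]mxE [in RHS]mxE; case: eqVneq => [->|hij]; first by rewrite mulr1n.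
  by rewrite mulr0n D.
split.
  move=> a; apply/normalmxP; rewrite VT.
  have ct2 : (P^t* *m T a *m P)^t* = P^t* *m (T a)^t* *m P.
    by rewrite !trmx_mul !map_mxM trmxCK mulmxA.
  have TT : T a *m (T a)^t* = (T a)^t* *m T a.
    rewrite Tdiag tr_diag_mx map_diag_mx !mul_diag_mx.
    by apply/matrixP => i j; rewrite !mxE !mulrnAr mulrC.
  rewrite ct2; move: TT; move: (T a) => M TT.
  by rewrite !mulmxA !(mulmxtVK _ Pu) -[P^t* *m M *m _]mulmxA TT mulmxA.
exists (P^t*); split; first by rewrite trmxCK.
move=> a j; exists (T a j j).
have -> : V a *m col j (P^t*) = col j (P^t* *m T a).
  by rewrite !colE VT mulmxA -[_ *m P *m _]mulmxA PPt mulmx1 mulmxA.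
have Da := D a; move: (T a) Da => M Da.
apply/matrixP => i z; rewrite !mxE (bigD1 j) //= big1 ?addr0; first by rewrite !mxE mulrC.
by move=> k hk; rewrite Da ?mulr0.
Qed.
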